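(* Let $A_{12}\in\mathbb{R}_{\ge 0}^{m\times n}$ with $\mathrm{rank}(A_{12})=m$, and let $A_{22}=[a_{ij}]\in\mathbb{R}^{n\times n}$ satisfy: $a_{ij}\ge 0$ for $i\neq j$, $a_{ii}\le 0$; the directed graph on $\{1,\dots,n\}$ with an edge $j\to i$ whenever $i\ne j$ and $a_{ij}>0$ is weakly connected; and, with $s_i=\sum_{j\neq i}(a_{ij}+a_{ji})$, one has $s_i\le 2|a_{ii}|$ for all $i$ and $s_j<2|a_{jj}|$ for at least one $j$. Let $Q\in\mathfrak{C}_{n,k}$ satisfy $\mathrm{rank}(A_{12}Q)=k$. For $\phi\in\mathbb{R}$ define $R_\phi=Q^+A_{22}\big(I_n-(I_n-\phi QQ^+)A_{12}^{\dagger}A_{12}\big)$ and $M_\phi=R_\phi Q$. Then there exists $\psi\in\mathbb{R}$ such that $M_\phi$ is Hurwitz for every $\phi>\psi$.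
   Context: $\mathfrak{C}_{n,k}=\{X\in\{0,1\}^{n\times k}: X\mathbf{1}_k=\mathbf{1}_n\}$, with every column of $Q$ nonzero; $Q^+=(Q^\top Q)^{-1}Q^\top$. $A_{12}^{\dagger}=A_{12}^\top(A_{12}A_{12}^\top)^{-1}$ is the Moore–Penrose pseudo-inverse of the full-row-rank matrix $A_{12}$. (Equivalently, $R_\phi=Q^+A_{22}-LA_{12}$ with $L=(Q^+A_{22}-\phi\,Q^+A_{22}QQ^+)A_{12}^\dagger$.) A matrix is Hurwitz if all its eigenvalues have negative real part. *)

(* Defs.v *)
From HB Require Import structures.
From mathcomp Require Import all_boot all_order all_algebra.
From mathcomp Require Import complex.
From mathcomp Require Import reals.
Set Implicit Arguments. Unset Strict Implicit. Unset Printing Implicit Defensive.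
Import Order.TTheory GRing.Theory Num.Theory.
Local Open Scope ring_scope.
Local Open Scope complex_scope.

Definition clustering_matrix (R : realType) (n k : nat) (Q : 'M[R]_(n, k)) : Prop :=
  (forall i j, Q i j = 0 \/ Q i j = 1) /\
  (forall i, \sum_(j < k) Q i j = 1) /\
  (forall j, exists i, Q i j != 0).

Definition qplus (R : realType) (n k : nat) (Q : 'M[R]_(n, k)) : 'M[R]_(k, n) :=
  invmx (Q^T *m Q) *m Q^T.

Definition pinv_fullrow (R : realType) (m n : nat) (A : 'M[R]_(m, n)) : 'M[R]_(n, m) :=
  A^T *m invmx (A *m A^T).

Definition weak_adj (R : realType) (n : nat) (A : 'M[R]_n) : rel 'I_n :=
  fun i j => (i != j) && ((0 < A i j) || (0 < A j i)).

Definition weakly_connected (R : realType) (n : nat) (A : 'M[R]_n) : Prop :=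
  forall i j : 'I_n, connect (weak_adj A) i j.

Definition hurwitz (R : realType) (k : nat) (M : 'M[R]_k) : Prop :=
  forall z : R[i], eigenvalue (map_mx (fun x : R => x%:C) M) z -> Re z < 0.

Definition R_phi (R : realType) (m n k : nat) (A12 : 'M[R]_(m, n)) (A22 : 'M[R]_n)
  (Q : 'M[R]_(n, k)) (phi : R) : 'M[R]_(k, n) :=
  qplus Q *m A22 *m (1%:M - (1%:M - phi *: (Q *m qplus Q)) *m pinv_fullrow A12 *m A12).

Definition M_phi (R : realType) (m n k : nat) (A12 : 'M[R]_(m, n)) (A22 : 'M[R]_n)
  (Q : 'M[R]_(n, k)) (phi : R) : 'M[R]_k :=
  R_phi A12 A22 Q phi *m Q.

(* Main.v *)
Require Import Defs.
From HB Require Import structures.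
From mathcomp Require Import all_boot all_order all_algebra.
From mathcomp Require Import complex reals.
From mathcomp Require Import ring lra.
Import Order.TTheory GRing.Theory Num.Theory.
Set Implicit Arguments. Unset Strict Implicit. Unset Printing Implicit Defensive.
Local Open Scope ring_scope.

Section Aux.
Variable R : realType.

Definition qf n (X : 'M[R]_n) (x : 'rV[R]_n) : R := (x *m X *m x^T) 0 0.
Definition nrm2 n (x : 'rV[R]_n) : R := \sum_i x 0 i ^+ 2.

Lemma qfE n (X : 'M[R]_n) x :
  qf X x = \sum_i \sum_j x 0 i * X i j * x 0 j.
Proof.
rewrite /qf mxE.
under eq_bigr => j _ do rewrite !mxE big_distrl /=.
rewrite exchange_big /=; apply: eq_bigr => i _; apply: eq_bigr => j _.
by [].

Qed.

Lemma nrm2_ge0 n (x : 'rV[R]_n) : 0 <= nrm2 x.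
Proof. by apply: sumr_ge0 => i _; rewrite sqr_ge0. Qed.

Lemma nrm2_eq0 n (x : 'rV[R]_n) : nrm2 x = 0 -> x = 0.
Proof.
move=> h; apply/rowP => i; rewrite mxE.
have := psumr_eq0P (fun i _ => sqr_ge0 (x 0 i)) h (i := i) isT.
by move/eqP; rewrite sqrf_eq0 => /eqP.
Qed.

Lemma nrm2_gt0 n (x : 'rV[R]_n) : x != 0 -> 0 < nrm2 x.
Proof.
move=> hx; rewrite lt_def nrm2_ge0 andbT; apply/eqP => h.
by move/eqP: hx; apply; apply: nrm2_eq0.
Qed.

Lemma mxself n (x : 'rV[R]_n) : (x *m x^T) 0 0 = nrm2 x.
Proof. rewrite mxE; apply: eq_bigr => i _; by rewrite mxE expr2. Qed.


Section Neg.
Variables (n : nat) (A : 'M[R]_n).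
Hypothesis Aoff : forall i j, i != j -> 0 <= A i j.
Hypothesis Adiag : forall i, A i i <= 0.
Hypothesis Acon : weakly_connected A.
Hypothesis Adom : forall i, \sum_(j < n | j != i) (A i j + A j i) <= 2 * `|A i i|.
Variable j0 : 'I_n.
Hypothesis Astr : \sum_(l < n | l != j0) (A j0 l + A l j0) < 2 * `|A j0 j0|.

Let B i j := A i j + A j i.
Let t i := \sum_j B i j.
Let F (y : 'rV[R]_n) := \sum_i \sum_j B i j * (y 0 i - y 0 j) ^+ 2.

Lemma t_split i : t i = \sum_(j | j != i) B i j + 2 * A i i.
Proof. by rewrite /t (bigD1 i) //= addrC /B mulr2n mulrDl mul1r. Qed.

Lemma t_le0 i : t i <= 0.
Proof.
rewrite t_split; have := Adom i; rewrite ler0_norm // => h.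
rewrite /B; lra.
Qed.

Lemma t_lt0 : t j0 < 0.
Proof.
rewrite t_split; move: Astr; rewrite ler0_norm // => h.
rewrite /B; lra.
Qed.

Lemma Fterm_ge0 (y : 'rV[R]_n) i j : 0 <= B i j * (y 0 i - y 0 j) ^+ 2.
Proof.
have [->|nij] := eqVneq i j; first by rewrite subrr expr0n /= mulr0.
apply: mulr_ge0; last exact: sqr_ge0.
by rewrite /B addr_ge0 // Aoff // eq_sym.
Qed.

Lemma F_ge0 (y : 'rV[R]_n) : 0 <= F y.
Proof. by apply: sumr_ge0 => i _; apply: sumr_ge0 => j _; apply: Fterm_ge0. Qed.

Lemma Fterm_le (y : 'rV[R]_n) i j : B i j * (y 0 i - y 0 j) ^+ 2 <= F y.
Proof.
rewrite /F (bigD1 i) //= (bigD1 j) //=.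
rewrite -addrA lerDl addr_ge0 //.
  by apply: sumr_ge0 => l _; apply: Fterm_ge0.
by apply: sumr_ge0 => l _; apply: sumr_ge0 => l' _; apply: Fterm_ge0.
Qed.

Lemma qf_ident (y : 'rV[R]_n) : 4 * qf A y = 2 * \sum_i t i * y 0 i ^+ 2 - F y.
Proof.
have S1 : \sum_i t i * y 0 i ^+ 2 = \sum_i \sum_j B i j * y 0 i ^+ 2.
  by apply: eq_bigr => i _; rewrite /t big_distrl.
have S2 : \sum_i t i * y 0 i ^+ 2 = \sum_i \sum_j B i j * y 0 j ^+ 2.
  rewrite [RHS]exchange_big /=; apply: eq_bigr => i _; rewrite /t big_distrl /=.
  by apply: eq_bigr => j _; rewrite /B addrC.
have S4 : qf A y = \sum_i \sum_j A j i * y 0 i * y 0 j.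
  rewrite qfE exchange_big /=; apply: eq_bigr => i _; apply: eq_bigr => j _.
  ring.
have S3 := qfE A y.
transitivity (\sum_i \sum_j (2 * (y 0 i * A i j * y 0 j) + 2 * (A j i * y 0 i * y 0 j))).
  under eq_bigr => i _ do rewrite big_split /= -!mulr_sumr.
  rewrite big_split /= -!mulr_sumr -S3 -S4; ring.
transitivity (\sum_i \sum_j (B i j * y 0 i ^+ 2 + B i j * y 0 j ^+ 2 - B i j * (y 0 i - y 0 j) ^+ 2)).
  by apply: eq_bigr => i _; apply: eq_bigr => j _; rewrite /B; ring.
under eq_bigr => i _ do rewrite sumrB big_split /=.
rewrite sumrB big_split /= -S1 -S2 /F; ring.
Qed.


Let G (y : 'rV[R]_n) := y 0 j0 ^+ 2 + F y.

Lemma G_ge0 (y : 'rV[R]_n) : 0 <= G y.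
Proof. by rewrite /G addr_ge0 ?sqr_ge0 ?F_ge0. Qed.

Lemma path_bound (i : 'I_n) : exists al : R, 0 <= al /\ forall y : 'rV[R]_n, y 0 i ^+ 2 <= al * G y.
Proof.
have /connectP [p pth ->] := Acon j0 i.
suff H : forall p x, (exists al : R, 0 <= al /\ forall y : 'rV[R]_n, y 0 x ^+ 2 <= al * G y) ->
    path (weak_adj A) x p ->
    exists al : R, 0 <= al /\ forall y : 'rV[R]_n, y 0 (last x p) ^+ 2 <= al * G y.
  apply: H pth; exists 1; split => // y; rewrite mul1r /G lerDl F_ge0 //.
elim => [|w q IH] x hx //= /andP[exw qw]; apply: IH qw.
move: exw => /andP[nxw hpos].
have h1 := Aoff nxw; have h2 : 0 <= A w x by apply: Aoff; rewrite eq_sym.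
have Bpos : 0 < B x w by rewrite /B; case/orP: hpos => h; lra.
case: hx => al [al0 hal].
exists (2 * al + 2 * (B x w)^-1); split.
  by rewrite addr_ge0 ?mulr_ge0 // invr_ge0 ltW.
move=> y; have e1 := hal y; have e2 := Fterm_le y x w.
have e3 : (y 0 x - y 0 w) ^+ 2 <= (B x w)^-1 * G y.
  have -> : (y 0 x - y 0 w) ^+ 2 = (B x w)^-1 * (B x w * (y 0 x - y 0 w) ^+ 2).
    by rewrite mulrA mulVf ?mul1r // gt_eqF.
  apply: ler_wpM2l; first by rewrite invr_ge0 ltW.
  by apply: (le_trans e2); rewrite /G lerDr sqr_ge0.
have e4 := sqr_ge0 (2 * y 0 x - y 0 w).
set e := (B x w)^-1 in e3 *.
nra.
Qed.

Lemma sum_bound : exists al : R, 0 <= al /\ forall y : 'rV[R]_n, nrm2 y <= al * G y.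
Proof.
suff H : forall s : seq 'I_n, exists al : R, 0 <= al /\
    forall y : 'rV[R]_n, \sum_(i <- s) y 0 i ^+ 2 <= al * G y by apply: H.
elim => [|i s [al [al0 h]]].
  by exists 0; split => // y; rewrite big_nil mul0r.
have [b [b0 hb]] := path_bound i.
exists (b + al); split; first by rewrite addr_ge0.
by move=> y; rewrite big_cons mulrDl lerD.
Qed.

Lemma qf_neg : exists c : R, 0 < c /\ forall y : 'rV[R]_n, qf A y <= - c * nrm2 y.
Proof.
set tau := - t j0 / 2.
have tau0 : 0 < tau by rewrite /tau; have := t_lt0; lra.
set mu := Num.min (1/4) tau.
have mu0 : 0 < mu by rewrite lt_min tau0 andbT; lra.
have mu1 : mu <= 1/4 by rewrite ge_min lexx.
have mu2 : mu <= tau by rewrite ge_min lexx orbT.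
have key : forall y : 'rV[R]_n, mu * G y <= - qf A y.
  move=> y; have hq := qf_ident y.
  have hs : \sum_i t i * y 0 i ^+ 2 <= t j0 * y 0 j0 ^+ 2.
    rewrite (bigD1 j0) //= gerDl; apply: sumr_le0 => i _.
    by apply: mulr_le0_ge0; [apply: t_le0|apply: sqr_ge0].
  have hF := F_ge0 y; have hy := sqr_ge0 (y 0 j0).
  rewrite /G; rewrite /tau in mu2; nra.
have [al [al0 hal]] := sum_bound.
exists (mu / (al + 1)); split; first by rewrite divr_gt0 //; lra.
move=> y; rewrite mulNr lerNr.
apply: le_trans (key y).
have hal1 : al + 1 != 0 by rewrite gt_eqF //; lra.
have hN : nrm2 y <= (al + 1) * G y.
  have := hal y; have := G_ge0 y; have := nrm2_ge0 y; nra.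
apply: (le_trans (y := mu / (al + 1) * ((al + 1) * G y))).
  by apply: ler_wpM2l => //; rewrite divr_ge0 //; lra.
by rewrite mulrA divfK.
Qed.

End Neg.

Lemma qf_ub n (Y : 'M[R]_n) : exists K : R, 0 <= K /\ forall y : 'rV[R]_n, qf Y y <= K * nrm2 y.
Proof.
exists (\sum_i \sum_j `|Y i j|); split.
  by apply: sumr_ge0 => i _; apply: sumr_ge0 => j _.
move=> y; rewrite qfE big_distrl /=; apply: ler_sum => i _.
rewrite big_distrl /=; apply: ler_sum => j _.
have hsq : forall l, y 0 l ^+ 2 <= nrm2 y.
  move=> l; rewrite /nrm2 (bigD1 l) //= lerDl.
  by apply: sumr_ge0 => l' _; rewrite sqr_ge0.
have hu : `|y 0 i * y 0 j| <= nrm2 y.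
  have := hsq i; have := hsq j => h1 h2.
  have := sqr_ge0 (y 0 i - y 0 j); have := sqr_ge0 (y 0 i + y 0 j) => h3 h4.
  rewrite ler_norml; apply/andP; split; nra.
have -> : y 0 i * Y i j * y 0 j = Y i j * (y 0 i * y 0 j) by ring.
apply: (le_trans (ler_norm _)); rewrite normrM.
by apply: ler_wpM2l.
Qed.

Lemma unit_gram p q (T : 'M[R]_(p, q)) : row_free T -> T *m T^T \in unitmx.
Proof.
move=> hT; rewrite -row_free_unit; apply: inj_row_free => z hz.
have h : nrm2 (z *m T) = 0.
  by rewrite -mxself trmx_mul mulmxA -(mulmxA z) hz mul0mx mxE.
by apply/eqP; rewrite -(mulmx_free_eq0 _ hT); apply/eqP; apply: nrm2_eq0.
Qed.

Local Notation cRe := (@complex.Re R).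
Local Notation cIm := (@complex.Im R).
Lemma cReD (x y : R[i]) : cRe (x + y) = cRe x + cRe y. Proof. by case: x => ? ?; case: y. Qed.
Lemma cImD (x y : R[i]) : cIm (x + y) = cIm x + cIm y. Proof. by case: x => ? ?; case: y. Qed.
Lemma cReM (x y : R[i]) : cRe (x * y) = cRe x * cRe y - cIm x * cIm y.
Proof. by case: x => ? ?; case: y. Qed.
Lemma cImM (x y : R[i]) : cIm (x * y) = cRe x * cIm y + cIm x * cRe y.
Proof. by case: x => ? ?; case: y => ? ? /=; ring. Qed.
Lemma cRe_sum n (f : 'I_n -> R[i]) : cRe (\sum_i f i) = \sum_i cRe (f i).
Proof. exact: (big_morph _ cReD (erefl _)). Qed.
Lemma cIm_sum n (f : 'I_n -> R[i]) : cIm (\sum_i f i) = \sum_i cIm (f i).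
Proof. exact: (big_morph _ cImD (erefl _)). Qed.

End Aux.

Unset Implicit Arguments.

Lemma qf_inv (R : realType) p (S0 : 'M[R]_p) x :
  S0^T = S0 -> S0 \in unitmx -> qf (invmx S0) x = qf S0 (x *m invmx S0).
Proof.
move=> hs hu; rewrite /qf trmx_mul trmx_inv hs !mulmxA.
by rewrite -(mulmxA (x *m invmx S0) S0) mulmxV // mulmx1.
Qed.

Lemma Mexp (R : realType) n k m (Qp0 : 'M[R]_(k,n)) (A22 : 'M[R]_n) (Q : 'M[R]_(n,k)) (pv : 'M[R]_(n,m)) (A : 'M[R]_(m,n)) (phi : R) :
  Qp0 *m A22 *m (1%:M - (1%:M - phi *: (Q *m Qp0)) *m pv *m A) *m Q =
  Qp0 *m A22 *m (1%:M - pv *m A) *m Q + phi *: (Qp0 *m A22 *m Q *m (Qp0 *m (pv *m A) *m Q)).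
Proof.
rewrite !mulmxBl !mul1mx opprB addrC !mulmxDr !mulmxDl -!scalemxAl !mulmxN !mulNmx.
rewrite -!scalemxAr -!scalemxAl !mulmxA.
by rewrite [LHS]addrAC [RHS]addrAC; congr (_ - _); rewrite addrC.
Qed.

Lemma assoc5 (R : realType) p1 p2 p3 p4 p5 p6 (a : 'M[R]_(p1,p2)) (b : 'M[R]_(p2,p3))
  (c : 'M[R]_(p3,p4)) (d : 'M[R]_(p4,p5)) (e : 'M[R]_(p5,p6)) :
  a *m b *m c *m d *m e = a *m (b *m c *m d *m e).
Proof. by rewrite !mulmxA. Qed.

Lemma assoc3r (R : realType) p1 p2 p3 p4 p5 (a : 'M[R]_(p1,p2)) (b : 'M[R]_(p2,p3))
  (c : 'M[R]_(p3,p4)) (d : 'M[R]_(p4,p5)) :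
  a *m b *m c *m d = a *m b *m (c *m d).
Proof. by rewrite !mulmxA. Qed.

Lemma qfD (R : realType) p (U V : 'M[R]_p) x : qf (U + V) x = qf U x + qf V x.
Proof. by rewrite /qf mulmxDr mulmxDl mxE. Qed.
Lemma qfZ (R : realType) p (U : 'M[R]_p) c x : qf (c *: U) x = c * qf U x.
Proof. by rewrite /qf -scalemxAr -scalemxAl mxE. Qed.
Lemma qf_conj (R : realType) p q (T : 'M[R]_(p, q)) (Y : 'M[R]_q) x :
  qf (T *m Y *m T^T) x = qf Y (x *m T).
Proof. by rewrite /qf trmx_mul !mulmxA. Qed.
Lemma cross_sym (R : realType) p (Y : 'M[R]_p) (a b : 'rV[R]_p) :
  Y^T = Y -> (b *m Y *m a^T) 0 0 = (a *m Y *m b^T) 0 0.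
Proof.
move=> hY; transitivity ((b *m Y *m a^T)^T 0 0); first by rewrite [RHS]mxE.
by rewrite !trmx_mul hY trmxK mulmxA.
Qed.
Lemma qf_lin (R : realType) p (Y : 'M[R]_p) (a b : 'rV[R]_p) al be :
  ((al *: a - be *: b) *m Y *m a^T) 0 0 = al * qf Y a - be * (b *m Y *m a^T) 0 0.
Proof.
have -> : (al *: a - be *: b) *m Y *m a^T = al *: (a *m Y *m a^T) - be *: (b *m Y *m a^T).
  by rewrite mulmxBl mulmxBl -!scalemxAl.
rewrite [LHS]mxE [X in X + _]mxE [X in _ + X]mxE [X in _ - X]mxE.
done.
Qed.

Section Main.
Variables (R : realType) (m n k : nat) (A : 'M[R]_(m, n)) (A22 : 'M[R]_n) (Q : 'M[R]_(n, k)).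
Hypothesis hA : row_free A.
Hypothesis hAQ : row_free (A *m Q)^T.

Let W0 := A *m A^T.
Let W := invmx W0.
Lemma W0u : W0 \in unitmx. Proof. exact: unit_gram. Qed.
Lemma W0sym : W0^T = W0. Proof. by rewrite /W0 trmx_mul trmxK. Qed.
Lemma Wsym : W^T = W. Proof. by rewrite /W trmx_inv W0sym. Qed.

Lemma qfW y : qf W y = nrm2 (y *m W *m A).
Proof.
rewrite -mxself !trmx_mul Wsym /qf !mulmxA.
by rewrite -(mulmxA (y *m W) A) -/W0 -(mulmxA y W W0) mulVmx ?W0u // mulmx1.
Qed.

Let P := pinv_fullrow A *m A.
Lemma PE : P = A^T *m W *m A. Proof. by []. Qed.
Lemma Psym : P^T = P. Proof. by rewrite PE !trmx_mul trmxK Wsym mulmxA. Qed.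

Let S := Q^T *m P *m Q.
Lemma qfS z : qf S z = qf W (z *m (A *m Q)^T).
Proof. by rewrite /qf /S PE !trmx_mul !trmxK !mulmxA. Qed.

Lemma Su : S \in unitmx.
Proof.
rewrite -row_free_unit; apply: inj_row_free => z hz.
have h0 : qf S z = 0 by rewrite /qf hz mul0mx mxE.
move: h0; rewrite qfS qfW => /nrm2_eq0 /eqP.
rewrite (mulmx_free_eq0 _ hA) => /eqP h1.
have h2 : z *m (A *m Q)^T = 0.
  by rewrite -[z *m _]mulmx1 -(mulVmx W0u) mulmxA -/W h1 mul0mx.
by apply/eqP; rewrite -(mulmx_free_eq0 _ hAQ); apply/eqP.
Qed.

Lemma Ssym : S^T = S.
Proof. by rewrite /S (trmx_mul (Q^T *m P) Q) (trmx_mul Q^T P) Psym !trmxK mulmxA. Qed.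
Let X := invmx S.
Lemma Xsym : X^T = X. Proof. by rewrite /X trmx_inv Ssym. Qed.

Lemma qfX_ge0 x : 0 <= qf X x.
Proof. by rewrite /X qf_inv ?Ssym ?Su // qfS qfW nrm2_ge0. Qed.

Let D := Q^T *m Q.
Lemma Du : D \in unitmx.
Proof.
rewrite -row_free_unit; apply: inj_row_free => z hz.
have h : nrm2 (z *m Q^T) = 0.
  by rewrite -mxself trmx_mul trmxK mulmxA -(mulmxA z) -/D hz mul0mx mxE.
have h2 : z *m (A *m Q)^T = 0 by rewrite trmx_mul mulmxA (nrm2_eq0 h) mul0mx.
by apply/eqP; rewrite -(mulmx_free_eq0 _ hAQ); apply/eqP.
Qed.

Let Qp := qplus Q.
Lemma QpQ : Qp *m Q = 1%:M.
Proof. by rewrite /Qp /qplus -mulmxA mulVmx ?Du. Qed.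
Lemma QpT : Qp^T = Q *m invmx D.
Proof. by rewrite /Qp /qplus trmx_mul trmxK trmx_inv /D trmx_mul trmxK. Qed.

Lemma QpPQX : Qp *m P *m Q *m X = invmx D.
Proof.
rewrite /Qp /qplus -/D assoc5 -/S /X mulmxV ?Su //; exact: mulmx1.
Qed.

Lemma MX phi : M_phi A A22 Q phi *m X =
  Qp *m A22 *m (1%:M - P) *m Q *m X + phi *: (Qp *m A22 *m Qp^T).
Proof.
rewrite /M_phi /R_phi -/Qp Mexp -/P mulmxDl -scalemxAl.
congr (_ + _); congr (_ *: _); by rewrite -mulmxA QpPQX -mulmxA -QpT.
Qed.

Let C := Qp *m A22 *m (1%:M - P) *m Q.

Lemma qfMX phi x : qf (M_phi A A22 Q phi *m X) x =
  qf (Q *m (C *m X) *m Q^T) (x *m Qp) + phi * qf A22 (x *m Qp).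
Proof.
have e1 : qf (Qp *m A22 *m Qp^T) x = qf A22 (x *m Qp) by apply: qf_conj.
have e2 : qf (Q *m (C *m X) *m Q^T) (x *m Qp) = qf (C *m X) x.
  by rewrite qf_conj -mulmxA QpQ mulmx1.
by rewrite MX qfD qfZ e1 e2.
Qed.

Lemma final_step (hneg : exists c : R, 0 < c /\ forall y, qf A22 y <= - c * nrm2 y) :
  exists psi : R, forall phi : R, psi < phi -> hurwitz (M_phi A A22 Q phi).
Proof.
case: hneg => c [c0 hc].
have [K [K0 hK]] := qf_ub (Q *m (C *m X) *m Q^T).
exists (K / c) => phi hphi z /eigenvalueP [v hv vn0].
set Mr := M_phi A A22 Q phi.
set a := map_mx (@complex.Re R) v.
set b := map_mx (@complex.Im R) v.
have ha : a *m Mr = complex.Re z *: a - complex.Im z *: b.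
  apply/rowP => j.
  transitivity (complex.Re ((v *m map_mx (fun x : R => (x%:C)%C) Mr) 0 j)).
    rewrite [(v *m _) 0 j]mxE cRe_sum [LHS]mxE; apply: eq_bigr => i _; rewrite !mxE.
    by case: (v 0 i) => p q /=; rewrite mulr0 subr0.
  by rewrite hv !mxE cReM.
have hb : b *m Mr = complex.Im z *: a + complex.Re z *: b.
  apply/rowP => j.
  transitivity (complex.Im ((v *m map_mx (fun x : R => (x%:C)%C) Mr) 0 j)).
    rewrite [(v *m _) 0 j]mxE cIm_sum [LHS]mxE; apply: eq_bigr => i _; rewrite !mxE.
    by case: (v 0 i) => p q /=; rewrite mulr0 add0r.
  by rewrite hv !mxE cImM addrC.
set X' := X.
have key : qf (Mr *m X') a + qf (Mr *m X') b =
    complex.Re z * (qf X' a + qf X' b).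
  have e1 : qf (Mr *m X') a = complex.Re z * qf X' a - complex.Im z * (b *m X' *m a^T) 0 0.
    by rewrite /qf mulmxA ha qf_lin.
  have e2 : qf (Mr *m X') b = complex.Im z * (a *m X' *m b^T) 0 0 + complex.Re z * qf X' b.
    rewrite /qf mulmxA hb mulmxDl mulmxDl -!scalemxAl.
    rewrite [LHS]mxE [X in X + _]mxE [X in _ + X]mxE.
    done.
  rewrite e1 e2 (@cross_sym R k X a b Xsym); ring.
have hq1 : qf (Mr *m X') a = qf (Q *m (C *m X) *m Q^T) (a *m Qp) + phi * qf A22 (a *m Qp).
  exact: qfMX.
have hq2 : qf (Mr *m X') b = qf (Q *m (C *m X) *m Q^T) (b *m Qp) + phi * qf A22 (b *m Qp).
  exact: qfMX.
set ya := a *m Qp in hq1; set yb := b *m Qp in hq2.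
have aQ : a = ya *m Q by rewrite /ya -mulmxA QpQ mulmx1.
have bQ : b = yb *m Q by rewrite /yb -mulmxA QpQ mulmx1.
have hnz : ~~ ((ya == 0) && (yb == 0)).
  apply/negP => /andP[/eqP h1 /eqP h2]; move/negP: vn0; apply; apply/eqP/rowP => j.
  have : a 0 j = 0 by rewrite aQ h1 mul0mx mxE.
  have : b 0 j = 0 by rewrite bQ h2 mul0mx mxE.
  rewrite !mxE; case: (v 0 j) => p q /= -> ->; done.
have hpos : 0 < nrm2 ya + nrm2 yb.
  have ga := nrm2_ge0 ya; have gb := nrm2_ge0 yb.
  case/nandP: hnz => h.
    have := nrm2_gt0 h; lra.
  have := nrm2_gt0 h; lra.
have hphic : K < phi * c by rewrite -ltr_pdivrMr.
have phi0 : 0 <= phi.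
  apply: ltW; apply: le_lt_trans hphi; exact: divr_ge0 (ltW c0).
have h3 : phi * qf A22 ya <= phi * (- c * nrm2 ya) by apply: ler_wpM2l.
have h4 : phi * qf A22 yb <= phi * (- c * nrm2 yb) by apply: ler_wpM2l.
have h5 : 0 < (phi * c - K) * (nrm2 ya + nrm2 yb) by apply: mulr_gt0 => //; lra.
have hK1 := hK ya; have hK2 := hK yb.
have hneg : complex.Re z * (qf X' a + qf X' b) < 0.
  rewrite -key hq1 hq2; nra.
have hx1 := qfX_ge0 a; have hx2 := qfX_ge0 b.
have hre : complex.Re z < 0.
  rewrite ltNge; apply/negP => hz.
  have : 0 <= complex.Re z * (qf X' a + qf X' b) by apply: mulr_ge0 => //; lra.
  lra.
by rewrite -complexRe ltcE /= eqxx.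
Qed.


End Main.

Theorem theorem4 (R : realType) (m n k : nat)
  (A12 : 'M[R]_(m, n)) (A22 : 'M[R]_n) (Q : 'M[R]_(n, k)) :
  (forall i j, 0 <= A12 i j) ->
  \rank A12 = m ->
  (forall i j, i != j -> 0 <= A22 i j) ->
  (forall i, A22 i i <= 0) ->
  weakly_connected A22 ->
  (forall i, \sum_(j < n | j != i) (A22 i j + A22 j i) <= 2 * `|A22 i i|) ->
  (exists j, \sum_(l < n | l != j) (A22 j l + A22 l j) < 2 * `|A22 j j|) ->
  clustering_matrix Q ->
  \rank (A12 *m Q) = k ->
  exists psi : R, forall phi : R, psi < phi -> hurwitz (M_phi A12 A22 Q phi).
Proof.
move=> _ hrk hoff hdiag hcon hdom [j0 hstr] _ hrkQ.
have hA : row_free A12 by rewrite /row_free hrk.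
have hAQ : row_free (A12 *m Q)^T by rewrite /row_free mxrank_tr hrkQ.
apply: (@final_step R m n k A12 A22 Q hA hAQ).
exact: (qf_neg hoff hdiag hcon hdom hstr).
Qed.
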